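(* Let $M\geq 1$, $P=4M-3$, and let $x\in\ell(\mathbb{Z}_P)$ be nonzero with $x[p]=0$ for all $p=M,\ldots,4M-4$. Let $q\in\{0,\ldots,M-1\}$ be the largest index with $x[q]\neq0$. Then the largest index $p\in\{0,\ldots,2M-2\}$ with $\operatorname{CirAut}(x+Rx)[p]\neq0$ is $p=2q$.
   Context: $\ell(\mathbb{Z}_P)$ denotes the space of $P$-periodic functions $u\colon\mathbb{Z}\to\mathbb{C}$, with inner product $\langle u,v\rangle=\sum_{p\in\mathbb{Z}_P}u[p]\overline{v[p]}$. The translation operator is $(T^pu)[p']:=u[p'-p]$ and the reversal operator is $(Ru)[p]:=u[-p]$. The circular autocorrelation is $\operatorname{CirAut}(u)[p]:=\langle u,T^pu\rangle=\sum_{p'\in\mathbb{Z}_P}u[p']\overline{u[p'-p]}$. *)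

(* Defs.v *)
From mathcomp Require Import all_boot all_order all_algebra.
From mathcomp Require Import complex.
Set Implicit Arguments. Unset Strict Implicit. Unset Printing Implicit Defensive.
Import Order.TTheory GRing.Theory Num.Theory.
Local Open Scope ring_scope.

(* A signal u : int -> C is an element of l(Z_P) when it is P-periodic. *)
Definition periodic (C : Type) (P : nat) (u : int -> C) : Prop :=
  forall p : int, u (p + P%:Z) = u p.

Definition transl (C : Type) (p : int) (u : int -> C) : int -> C :=
  fun p' => u (p' - p).

Definition rev_sig (C : Type) (u : int -> C) : int -> C := fun p => u (- p).

Definition inner (R : rcfType) (P : nat) (u v : int -> R[i]) : R[i] :=
  \sum_(p < P) u (p%:Z) * (v (p%:Z))^*.

Definition CirAut (R : rcfType) (P : nat) (u : int -> R[i]) (p : int) : R[i] :=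
  inner P u (transl p u).

(* Main.v *)
Require Import Defs.
From mathcomp Require Import all_boot all_order all_algebra.
From mathcomp Require Import complex.
From mathcomp Require Import zify.
Import Order.TTheory GRing.Theory Num.Theory.
Local Open Scope ring_scope.

Theorem lemma3 (R : rcfType) (M : nat) (x : int -> R[i])
  (hM : (1 <= M)%N)
  (hper : periodic (4 * M - 3) x)
  (hnz : exists p : int, x p != 0)
  (hzero : forall p : nat, (M <= p <= 4 * M - 4)%N -> x (p%:Z) = 0)
  (q : nat) (hqM : (q < M)%N) (hq : x (q%:Z) != 0)
  (hqmax : forall r : nat, (q < r < M)%N -> x (r%:Z) = 0) :
  let y := fun p => x p + rev_sig x p in
  CirAut (4 * M - 3) y ((2 * q)%N%:Z) != 0 /\
  (forall p : nat, (2 * q < p <= 2 * M - 2)%N ->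
     CirAut (4 * M - 3) y (p%:Z) = 0).
Proof.
move=> y.
set N := (4 * M - 3)%N in hper *.
have hN : N = (4 * M - 3)%N by [].
clearbody N.
have xn : forall m : nat, (m < 2 * N)%N ->
    x m%:Z = 0 \/ (m <= q)%N \/ (N <= m <= N + q)%N.
  move=> m hm.
  have base : forall m', (m' < N)%N -> x m'%:Z = 0 \/ (m' <= q)%N.
    move=> m' hm'; case: (leqP m' q) => h; first by right.
    left; case: (ltnP m' M) => h2; first by apply: hqmax; rewrite h h2.
    apply: hzero; rewrite h2 /=; lia.
  case: (ltnP m N) => h.
    by case: (base m h) => ?; [left|right; left].
  have -> : m%:Z = (m - N)%N%:Z + N%:Z by lia.
  rewrite hper; case: (base (m - N)%N ltac:(lia)) => ?; [left=> //|right; right; lia].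
have yk : forall a b : nat, (a <= N)%N -> (b <= N)%N ->
    y (a%:Z - b%:Z) = x (a + N - b)%N%:Z + x (b + N - a)%N%:Z.
  move=> a b ha hb; rewrite /y /rev_sig -hper -(hper (- _)).
  congr (x _ + x _); lia.
have y0 : forall a : nat, (a <= N)%N -> y a%:Z = x (a + N)%N%:Z + x (N - a)%N%:Z.
  move=> a ha; have := yk a 0%N ha isT; rewrite subr0 subn0 add0n => ->.
  by [].
have term0 : forall k p : nat, (k < N)%N -> (p < N)%N ->
   ((x (k + N)%N%:Z = 0 /\ x (N - k)%N%:Z = 0) \/
    (x (k + N - p)%N%:Z = 0 /\ x (p + N - k)%N%:Z = 0)) ->
   y k%:Z * (y (k%:Z - p%:Z))^* = 0.
  move=> k p hk hp [[h1 h2]|[h1 h2]].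
    by rewrite y0 ?h1 ?h2 ?addr0 ?mul0r //; lia.
  by rewrite yk ?h1 ?h2 ?addr0 ?conjC0 ?mulr0 //; lia.
have Hcases : forall k p : nat, (k < N)%N -> (p < N)%N ->
   (x (k + N)%N%:Z = 0 \/ (k + N <= q)%N \/ (N <= k + N <= N + q)%N) ->
   (x (N - k)%N%:Z = 0 \/ (N - k <= q)%N \/ (N <= N - k <= N + q)%N) ->
   (x (k + N - p)%N%:Z = 0 \/ (k + N - p <= q)%N \/ (N <= k + N - p <= N + q)%N) ->
   (x (p + N - k)%N%:Z = 0 \/ (p + N - k <= q)%N \/ (N <= p + N - k <= N + q)%N) ->
   (2 * q < p <= 2 * M - 2)%N \/ (p = 2 * q /\ k <> q)%N ->
   y k%:Z * (y (k%:Z - p%:Z))^* = 0.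
  move=> k p hk hp c1 c2 c3 c4 hc; apply: term0 => //.
  case: c1 => [e1|c1]; case: c2 => [e2|c2]; try (left; split; assumption);
  case: c3 => [e3|c3]; case: c4 => [e4|c4]; try (right; split; assumption);
  exfalso; lia.
have HC : forall k p : nat, (k < N)%N -> (p < N)%N ->
   (2 * q < p <= 2 * M - 2)%N \/ (p = 2 * q /\ k <> q)%N ->
   y k%:Z * (y (k%:Z - p%:Z))^* = 0.
  move=> k p hk hp hc; apply: Hcases => //; apply: xn; lia.
rewrite /CirAut /inner /transl; split; last first.
  move=> p hp; apply: big1 => k _; apply: HC => //; lia.
have hqN : (q < N)%N by lia.
rewrite (bigD1 (Ordinal hqN)) //= big1 ?addr0; last first.
  move=> k hk; apply: HC => //; first by lia.
  right; split => //; move=> e; move: hk; apply/negP; rewrite negbK.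
  by apply/eqP; apply: val_inj.
rewrite y0 ?yk; try (lia).
have -> : (q + N - 2 * q)%N = (N - q)%N by lia.
have -> : (2 * q + N - q)%N = (q + N)%N by lia.
rewrite [x (N - q)%N%:Z + _]addrC.
rewrite mulf_eq0 conjC_eq0 orbb.
have -> : x (q + N)%N%:Z = x q%:Z by rewrite PoszD hper.
case: (posnP q) => hq0.
  have -> : (N - q)%N = (0 + N)%N by lia.
  rewrite PoszD hper -hq0 -mulr2n mulrn_eq0.
  by rewrite (negbTE hq).
rewrite (hzero (N - q)%N) ?addr0; [exact: hq | lia].
Qed.
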